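(* Let $(G,\tau,\partial)$ be a Polish topometric group with the Steinhaus property. Then for any Polish topology $\tau'$ on $G$ such that $(G,\tau',\partial)$ is also a (Polish) topometric group, we have $\tau=\tau'$.
   Context: A topometric group is a triple $(G,\tau,\partial)$ with $(G,\tau)$ a topological group, $\partial$ a bi-invariant metric whose topology refines $\tau$ and which is $\tau$-lower semi-continuous ($\{(x,y)\colon\partial(x,y)\le r\}$ is $\tau$-closed for all $r$); it is Polish if $\tau$ is Polish. For $A\subseteq G$, $(A)_\varepsilon=\{g\colon\partial(g,A)<\varepsilon\}$. $A\subseteq G$ is $\sigma$-syndetic if $G$ is covered by countably many left translates of $A$. $(G,\tau,\partial)$ has the Steinhaus property if there is an integer $k$ such that for every symmetric $\sigma$-syndetic $A\subseteq G$ and every $\varepsilon>0$, $1_G\in\mathrm{Int}_\tau\big((A^k)_\varepsilon\big)$. *)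

(* Defs.v *)
(* concrete reals R. Topologies on a fixed carrier are given
   explicitly as families of open sets, since the statement compares two
   topologies on the same group. *)
From Stdlib Require Import Reals.
Open Scope R_scope.

Definition set (T : Type) := T -> Prop.

Record GroupStr (G : Type) := {
  gmul : G -> G -> G;
  ginv : G -> G;
  gone : G;
  gmulA : forall x y z, gmul x (gmul y z) = gmul (gmul x y) z;
  gmul1l : forall x, gmul gone x = x;
  gmul1r : forall x, gmul x gone = x;
  gmulVl : forall x, gmul (ginv x) x = gone;
  gmulVr : forall x, gmul x (ginv x) = gone }.
Arguments gmul {G}. Arguments ginv {G}. Arguments gone {G}.

Definition is_topology {G : Type} (tau : set (set G)) : Prop :=
  tau (fun _ => False) /\ tau (fun _ => True) /\
  (forall F : set (set G), (forall U, F U -> tau U) ->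
      tau (fun x => exists U, F U /\ U x)) /\
  (forall U V, tau U -> tau V -> tau (fun x => U x /\ V x)).

Definition prod_open {G : Type} (tau : set (set G)) (W : set (G * G)) : Prop :=
  forall p, W p -> exists A B, tau A /\ tau B /\ A (fst p) /\ B (snd p) /\
    (forall x y, A x -> B y -> W (x, y)).

Definition prod_closed {G : Type} (tau : set (set G)) (C : set (G * G)) : Prop :=
  prod_open tau (fun p => ~ C p).

Definition is_topological_group {G : Type} (grp : GroupStr G)
    (tau : set (set G)) : Prop :=
  is_topology tau /\
  (forall V, tau V -> prod_open tau (fun p => V (gmul grp (fst p) (snd p)))) /\
  (forall V, tau V -> tau (fun x => V (ginv grp x))).

Definition is_metric {G : Type} (d : G -> G -> R) : Prop :=
  (forall x y, 0 <= d x y) /\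
  (forall x y, d x y = 0 <-> x = y) /\
  (forall x y, d x y = d y x) /\
  (forall x y z, d x z <= d x y + d y z).

Definition metric_open {G : Type} (d : G -> G -> R) (U : set G) : Prop :=
  forall x, U x -> exists r, 0 < r /\ forall y, d x y < r -> U y.

Definition bi_invariant {G : Type} (grp : GroupStr G) (d : G -> G -> R) : Prop :=
  forall g x y, d (gmul grp g x) (gmul grp g y) = d x y /\
                d (gmul grp x g) (gmul grp y g) = d x y.

Definition is_topometric_group {G : Type} (grp : GroupStr G)
    (tau : set (set G)) (d : G -> G -> R) : Prop :=
  is_topological_group grp tau /\
  is_metric d /\ bi_invariant grp d /\
  (forall U, tau U -> metric_open d U) /\
  (* d is tau-lower semicontinuous *)
  (forall r : R, prod_closed tau (fun p => d (fst p) (snd p) <= r)).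

Definition cauchy_seq {G : Type} (d : G -> G -> R) (u : nat -> G) : Prop :=
  forall e, 0 < e -> exists N, forall m n, (N <= m)%nat -> (N <= n)%nat ->
    d (u m) (u n) < e.

Definition converges_to {G : Type} (d : G -> G -> R) (u : nat -> G) (x : G) : Prop :=
  forall e, 0 < e -> exists N, forall n, (N <= n)%nat -> d (u n) x < e.

Definition separable {G : Type} (tau : set (set G)) : Prop :=
  exists s : nat -> G, forall U, tau U -> (exists x, U x) -> exists n, U (s n).

Definition polish {G : Type} (tau : set (set G)) : Prop :=
  is_topology tau /\ separable tau /\
  exists d' : G -> G -> R, is_metric d' /\
    (forall U, tau U <-> metric_open d' U) /\
    (forall u, cauchy_seq d' u -> exists x, converges_to d' u x).

Definition sigma_syndetic {G : Type} (grp : GroupStr G) (A : set G) : Prop :=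
  exists g : nat -> G, forall x, exists n a, A a /\ x = gmul grp (g n) a.

Definition symmetric_set {G : Type} (grp : GroupStr G) (A : set G) : Prop :=
  forall x, A x -> A (ginv grp x).

(* A^1 = A, A^(k+1) = A^k A  (setpow grp A k = A^(k+1)) *)
Fixpoint setpow {G : Type} (grp : GroupStr G) (A : set G) (k : nat) : set G :=
  match k with
  | O => A
  | S k' => fun x => exists y a, setpow grp A k' y /\ A a /\ x = gmul grp y a
  end.

(* (A)_eps = { g | d(g, A) < eps }, d(g,A) = inf_{a in A} d(g,a) *)
Definition eps_nbhd {G : Type} (d : G -> G -> R) (A : set G) (eps : R) : set G :=
  fun g => exists a, A a /\ d g a < eps.

Definition in_interior {G : Type} (tau : set (set G)) (S : set G) (x : G) : Prop :=
  exists U, tau U /\ U x /\ forall y, U y -> S y.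

(** Steinhaus property; k ranges over positive integers (A^k = setpow A (k-1)) *)
Definition steinhaus {G : Type} (grp : GroupStr G) (tau : set (set G))
    (d : G -> G -> R) : Prop :=
  exists k : nat, (1 <= k)%nat /\
    forall A : set G, symmetric_set grp A -> sigma_syndetic grp A ->
      forall eps, 0 < eps ->
        in_interior tau (eps_nbhd d (setpow grp A (k - 1)) eps) (gone grp).

(* Main.v *)
Require Import Defs.
From Stdlib Require Import Reals.
From Stdlib Require Import ZArith Lra Lia Classical FunctionalExtensionality PropExtensionality ClassicalEpsilon Cantor.
Open Scope R_scope.
Arguments gmulA {G}. Arguments gmul1l {G}. Arguments gmul1r {G}. Arguments gmulVl {G}. Arguments gmulVr {G}.

Lemma g_inv_uniq {G} (grp : GroupStr G) x y : gmul grp x y = gone grp -> y = ginv grp x.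
Proof.
  intro H. rewrite <- (gmul1l grp y), <- (gmulVl grp x), <- gmulA, H, gmul1r. reflexivity.
Qed.
Lemma g_invK {G} (grp : GroupStr G) x : ginv grp (ginv grp x) = x.
Proof. symmetry; apply g_inv_uniq; apply gmulVl. Qed.
Lemma g_invM {G} (grp : GroupStr G) x y :
  ginv grp (gmul grp x y) = gmul grp (ginv grp y) (ginv grp x).
Proof.
  symmetry; apply g_inv_uniq.
  rewrite gmulA, <- (gmulA grp x y), gmulVr, gmul1r, gmulVr; reflexivity.
Qed.
Lemma g_KV {G} (grp : GroupStr G) x y : gmul grp (ginv grp x) (gmul grp x y) = y.
Proof. rewrite gmulA, gmulVl, gmul1l; reflexivity. Qed.
Lemma g_VK {G} (grp : GroupStr G) x y : gmul grp x (gmul grp (ginv grp x) y) = y.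
Proof. rewrite gmulA, gmulVr, gmul1l; reflexivity. Qed.
Lemma g_inv1 {G} (grp : GroupStr G) : ginv grp (gone grp) = gone grp.
Proof. symmetry; apply g_inv_uniq; apply gmul1l. Qed.

Lemma open_local {G} (T : set (set G)) (S : set G) : is_topology T ->
  (forall x, S x -> exists A, T A /\ A x /\ forall y, A y -> S y) -> T S.
Proof.
  intros [_ [_ [HU _]]] H.
  assert (E : S = (fun x => exists U, (fun A => T A /\ forall y, A y -> S y) U /\ U x)).
  { apply functional_extensionality; intro x; apply propositional_extensionality; split.
    - intro Sx. destruct (H x Sx) as [A [TA [Ax HA]]]. exists A; auto.
    - intros [U [[_ HU'] Ux]]; auto. }
  rewrite E. apply HU. intros U [TU _]; exact TU.
Qed.
Lemma open_inter {G} (T : set (set G)) U V : is_topology T -> T U -> T V ->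
  T (fun x => U x /\ V x).
Proof. intros [_ [_ [_ HI]]]; apply HI. Qed.
Lemma open_full {G} (T : set (set G)) : is_topology T -> T (fun _ => True).
Proof. intros [_ [H _]]; exact H. Qed.

Lemma metric_sym {G} (d : G -> G -> R) x y : is_metric d -> d x y = d y x.
Proof. intros [_ [_ [H _]]]; apply H. Qed.
Lemma metric_tri {G} (d : G -> G -> R) x y z : is_metric d -> d x z <= d x y + d y z.
Proof. intros [_ [_ [_ H]]]; apply H. Qed.
Lemma metric_pos {G} (d : G -> G -> R) x y : is_metric d -> 0 <= d x y.
Proof. intros [H _]; apply H. Qed.
Lemma metric_refl {G} (d : G -> G -> R) x : is_metric d -> d x x = 0.
Proof. intros [_ [H _]]; apply H; reflexivity. Qed.
Lemma metric_eq {G} (d : G -> G -> R) x y : is_metric d -> d x y = 0 -> x = y.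
Proof. intros [_ [H _]]; apply H. Qed.

Lemma ball_open {G} (d : G -> G -> R) c r : is_metric d ->
  metric_open d (fun y => d c y < r).
Proof.
  intros Hd x Hx. exists (r - d c x). split; [lra|].
  intros y Hy. pose proof (metric_tri d c x y Hd). lra.
Qed.

Lemma tg_top {G} grp (T : set (set G)) : is_topological_group grp T -> is_topology T.
Proof. intros [H _]; exact H. Qed.

Lemma tg_mul {G} grp (T : set (set G)) V a b : is_topological_group grp T -> T V ->
  V (gmul grp a b) -> exists A B, T A /\ T B /\ A a /\ B b /\
    forall x y, A x -> B y -> V (gmul grp x y).
Proof.
  intros [_ [HM _]] TV Vab. destruct (HM V TV (a, b) Vab) as [A [B [TA [TB [Aa [Bb H]]]]]].
  exists A, B; repeat split; auto.
Qed.

Lemma tg_inv {G} grp (T : set (set G)) V : is_topological_group grp T -> T V ->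
  T (fun x => V (ginv grp x)).
Proof. intros [_ [_ HI]]; apply HI. Qed.

Lemma tg_left {G} grp (T : set (set G)) V g : is_topological_group grp T -> T V ->
  T (fun x => V (gmul grp g x)).
Proof.
  intros HT TV. apply open_local; [exact (tg_top _ _ HT)|].
  intros x Vx. destruct (tg_mul grp T V g x HT TV Vx) as [A [B [_ [TB [Ag [Bx H]]]]]].
  exists B; repeat split; auto.
Qed.

Lemma tg_right {G} grp (T : set (set G)) V g : is_topological_group grp T -> T V ->
  T (fun x => V (gmul grp x g)).
Proof.
  intros HT TV. apply open_local; [exact (tg_top _ _ HT)|].
  intros x Vx. destruct (tg_mul grp T V x g HT TV Vx) as [A [B [TA [_ [Ax [Bg H]]]]]].
  exists A; repeat split; auto.
Qed.


Lemma le_eps (a b : R) : (forall e, 0 < e -> a < b + e) -> a <= b.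
Proof.
  intro H. destruct (Rle_or_lt a b) as [h|h]; auto.
  specialize (H ((a - b)/2)). lra.
Qed.

Lemma nested_balls {G} (d : G -> G -> R) (c : nat -> G) (r : nat -> R) :
  is_metric d ->
  (forall u, cauchy_seq d u -> exists x, converges_to d u x) ->
  (forall n, 0 < r n) ->
  (forall e, 0 < e -> exists N, forall n, (N <= n)%nat -> r n < e) ->
  (forall n w, d (c (S n)) w <= r (S n) -> d (c n) w < r n) ->
  exists x, forall n, d (c n) x < r n.
Proof.
  intros Hd Hc Hr Hr0 Hn.
  assert (K : forall k n w, d (c (k + n)%nat) w <= r (k + n)%nat -> d (c n) w <= r n).
  { induction k; intros n w H; simpl in *; auto.
    apply IHk. apply Rlt_le. apply Hn. replace (S (k + n)) with (S k + n)%nat by lia. exact H. }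
  assert (K2 : forall n m, (n <= m)%nat -> d (c n) (c m) < r n).
  { intros n m Hnm. destruct (Nat.eq_dec n m) as [->|ne].
    - rewrite metric_refl; auto.
    - apply Hn. apply (K (m - S n)%nat). replace (m - S n + S n)%nat with m by lia.
      rewrite metric_refl; auto. apply Rlt_le, Hr. }
  destruct (Hc c) as [x Hx].
  { intros e He. destruct (Hr0 e He) as [N HN]. exists N. intros m n Hm Hn'.
    destruct (Nat.le_ge_cases m n) as [h|h].
    - specialize (K2 m n h). specialize (HN m Hm). lra.
    - specialize (K2 n m h). specialize (HN n Hn'). rewrite metric_sym; auto. lra. }
  assert (L : forall n, d (c n) x <= r n).
  { intro n. apply le_eps. intros e He. destruct (Hx e He) as [N HN].
    pose (m := Nat.max n N).
    pose proof (K2 n m (Nat.le_max_l n N)). pose proof (HN m (Nat.le_max_r n N)).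
    pose proof (metric_tri d (c n) (c m) x Hd). lra. }
  exists x. intro n. apply Hn. apply L.
Qed.

Definition t_dense {G} (T : set (set G)) (S : set G) : Prop :=
  forall Q, T Q -> (exists q, Q q) -> exists y, Q y /\ S y.

Lemma small_inv (e : R) : 0 < e -> exists N : nat, forall n, (N <= n)%nat -> / (INR n + 1) < e.
Proof.
  intro He. destruct (archimed (/ e)) as [H1 _].
  pose proof (Rinv_0_lt_compat e He) as Hie.
  assert (0 <= IZR (up (/ e))) by lra.
  exists (Z.to_nat (up (/ e))). intros n Hn.
  apply le_INR in Hn. rewrite INR_IZR_INZ, Z2Nat.id in Hn by (apply le_IZR; lra).
  assert (Hlt : / e < INR n + 1) by lra.
  apply Rinv_lt_contravar in Hlt; [|apply Rmult_lt_0_compat; lra].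
  rewrite Rinv_inv in Hlt. exact Hlt.
Qed.

Lemma baire {G} (T : set (set G)) (d : G -> G -> R) (Gs : nat -> set G) (Q0 : set G) :
  is_topology T -> is_metric d -> (forall U, T U <-> metric_open d U) ->
  (forall u, cauchy_seq d u -> exists x, converges_to d u x) ->
  (forall n, T (Gs n) /\ t_dense T (Gs n)) ->
  T Q0 -> (exists q, Q0 q) -> exists z, Q0 z /\ forall n, Gs n z.
Proof.
  intros HT Hd HTd Hc HG TQ0 [q Qq].
  assert (step : forall n (p : G * R), exists p' : G * R,
     0 < snd p -> 0 < snd p' /\ snd p' <= / (INR n + 1) /\
       forall w, d (fst p') w <= snd p' -> d (fst p) w < snd p /\ Gs n w).
  { intros n [c r]. simpl.
    destruct (classic (0 < r)) as [hr|hr]; [|exists (c, r); intro; contradiction].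
    destruct (HG n) as [TGn DGn].
    destruct (DGn (fun y => d c y < r)) as [y [Hy Gy]].
    { apply HTd, ball_open; auto. }
    { exists c. rewrite metric_refl; auto. }
    assert (TI : T (fun w => d c w < r /\ Gs n w)).
    { apply open_inter; auto. apply HTd, ball_open; auto. }
    apply HTd in TI. destruct (TI y (conj Hy Gy)) as [rho [Hrho Hin]].
    assert (0 < / (INR n + 1)) by (apply Rinv_0_lt_compat; pose proof (pos_INR n); lra).
    exists (y, Rmin (rho / 2) (/ (INR n + 1))). simpl. intros _. split; [|split].
    - apply Rmin_glb_lt; lra.
    - apply Rmin_r.
    - intros w Hw. apply Hin. pose proof (Rmin_l (rho/2) (/ (INR n + 1))). lra. }
  pose (f := fun n p => proj1_sig (constructive_indefinite_description _ (step n p))).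
  assert (Hf : forall n p, 0 < snd p -> 0 < snd (f n p) /\ snd (f n p) <= / (INR n + 1) /\
       forall w, d (fst (f n p)) w <= snd (f n p) -> d (fst p) w < snd p /\ Gs n w).
  { intros n p. exact (proj2_sig (constructive_indefinite_description _ (step n p))). }
  clearbody f.
  apply HTd in TQ0. destruct (TQ0 q Qq) as [rho [Hrho Hin]].
  pose (p0 := (q, rho / 2)).
  pose (ps := fix ps n := match n with O => p0 | S n => f n (ps n) end).
  assert (Hpos : forall n, 0 < snd (ps n)).
  { induction n; simpl. lra. apply (Hf n (ps n) IHn). }
  destruct (nested_balls d (fun n => fst (ps (S n))) (fun n => snd (ps (S n))) Hd Hc) as [x Hx].
  - intro n; apply Hpos.
  - intros e He. destruct (small_inv e He) as [N HN]. exists N. intros n Hn.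
    simpl. destruct (Hf n (ps n) (Hpos n)) as [_ [h _]].
    pose proof (HN n Hn). lra.
  - intros n w Hw. simpl in Hw |- *. apply (Hf (S n) (ps (S n)) (Hpos (S n))). exact Hw.
  - exists x. split.
    + apply Hin. simpl in Hx. specialize (Hx O). simpl in Hx.
      destruct (Hf O p0 ltac:(simpl; lra)) as [_ [_ H]].
      destruct (H x (Rlt_le _ _ Hx)) as [H1 _]. simpl in H1. lra.
    + intro n. specialize (Hx n). simpl in Hx.
      destruct (Hf n (ps n) (Hpos n)) as [_ [_ H]]. apply (H x (Rlt_le _ _ Hx)).
Qed.


Lemma setpow_mono {G} grp (A B : set G) m x : (forall y, A y -> B y) ->
  setpow grp A m x -> setpow grp B m x.
Proof.
  intro H. revert x. induction m; simpl; auto.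
  intros x [y [a [Hy [Ha ->]]]]. exists y, a; auto.
Qed.

Lemma sym_pow {G} grp (T : set (set G)) : is_topological_group grp T ->
  forall m U, T U -> U (gone grp) ->
  exists W, T W /\ W (gone grp) /\ symmetric_set grp W /\
    forall x, setpow grp W m x -> U x.
Proof.
  intros HT. pose proof (tg_top _ _ HT) as Ht. induction m; intros U TU U1.
  - exists (fun x => U x /\ U (ginv grp x)). split; [|split; [|split]].
    + apply open_inter; auto. apply tg_inv; auto.
    + rewrite g_inv1; auto.
    + intros x [h1 h2]. rewrite g_invK. auto.
    + simpl. intros x [h _]; auto.
  - assert (U (gmul grp (gone grp) (gone grp))) by (rewrite gmul1l; auto).
    destruct (tg_mul grp T U _ _ HT TU H) as [A [B [TA [TB [A1 [B1 HAB]]]]]].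
    destruct (IHm A TA A1) as [W1 [TW1 [W11 [SW1 HW1]]]].
    exists (fun x => W1 x /\ (B x /\ B (ginv grp x))). split; [|split; [|split]].
    + apply open_inter; auto. apply open_inter; auto. apply tg_inv; auto.
    + rewrite g_inv1; auto.
    + intros x [h1 [h2 h3]]. rewrite g_invK. auto.
    + simpl. intros x [y [a [Hy [Ha ->]]]]. apply HAB.
      * apply HW1. eapply setpow_mono; [|exact Hy]. intros z [h _]; exact h.
      * apply Ha.
Qed.

Lemma syndetic_of_open {G} grp (T : set (set G)) W : is_topological_group grp T ->
  separable T -> T W -> W (gone grp) -> sigma_syndetic grp W.
Proof.
  intros HT [s Hs] TW W1. exists s. intro x.
  destruct (Hs (fun w => W (gmul grp (ginv grp w) x))) as [n Hn].
  - apply (tg_inv grp T (fun v => W (gmul grp v x))); auto. apply tg_right; auto.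
  - exists x. rewrite gmulVl; auto.
  - exists n, (gmul grp (ginv grp (s n)) x). split; auto. rewrite g_VK; auto.
Qed.

Lemma step1 {G} grp (tau : set (set G)) d (tau' : set (set G)) :
  is_topometric_group grp tau d -> steinhaus grp tau d ->
  is_topological_group grp tau' -> separable tau' ->
  (forall U, tau' U -> metric_open d U) ->
  forall V, tau' V -> tau V.
Proof.
  intros [HT [Hd [Hbi _]]] [k [Hk HS]] HT' Hsep' Href' V TV.
  apply open_local; [exact (tg_top _ _ HT)|]. intros x Vx.
  pose (V1 := fun w => V (gmul grp x w)).
  assert (TV1 : tau' V1) by (apply tg_left; auto).
  assert (V11 : V1 (gmul grp (gone grp) (gone grp))) by (unfold V1; rewrite !gmul1r; auto).
  destruct (tg_mul grp tau' V1 _ _ HT' TV1 V11) as [A [B [TA [TB [A1 [B1 HAB]]]]]].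
  pose (V' := fun w => A w /\ B w).
  assert (TV' : tau' V') by (apply open_inter; auto; exact (tg_top _ _ HT')).
  destruct (Href' V' TV' (gone grp) (conj A1 B1)) as [r [Hr Hball]].
  destruct (sym_pow grp tau' HT' (k - 1) V' TV' (conj A1 B1)) as [W [TW [W1 [SW HW]]]].
  destruct (HS W SW (syndetic_of_open grp tau' W HT' Hsep' TW W1) r Hr) as [U0 [TU0 [U01 HU0]]].
  exists (fun w => U0 (gmul grp (ginv grp x) w)). split; [|split].
  - apply tg_left; auto.
  - rewrite gmulVl; auto.
  - intros w Hw. apply HU0 in Hw. destruct Hw as [a [Ha Hda]].
    set (g := gmul grp (ginv grp x) w) in *.
    assert (Hv : V' (gmul grp (ginv grp a) g)).
    { apply Hball. destruct (Hbi (ginv grp a) a g) as [h _]. rewrite gmulVl in h.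
      rewrite h, metric_sym; auto. }
    pose proof (HW a Ha) as Va.
    pose proof (HAB a _ (proj1 Va) (proj2 Hv)) as H.
    unfold V1 in H. rewrite g_VK in H. unfold g in H. rewrite g_VK in H. exact H.
Qed.


Definition cl {G} (T : set (set G)) (S : set G) : set G :=
  fun y => forall N, T N -> N y -> exists e, N e /\ S e.

Lemma not_cl {G} (T : set (set G)) S y : ~ cl T S y ->
  exists N, T N /\ N y /\ forall e, N e -> ~ S e.
Proof.
  intro H. apply NNPP. intro H'. apply H. intros N TN Ny.
  apply NNPP. intro H2. apply H'. exists N. split; auto. split; auto.
  intros e Ne Se. apply H2. exists e; auto.
Qed.

Lemma lemmaL {G} grp (tau tau' : set (set G)) d2 (s : nat -> G) :
  is_topological_group grp tau ->
  (forall U, tau U -> (exists x, U x) -> exists n, U (s n)) ->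
  is_topological_group grp tau' ->
  is_metric d2 -> (forall U, tau' U <-> metric_open d2 U) ->
  (forall u, cauchy_seq d2 u -> exists x, converges_to d2 u x) ->
  forall E x, tau E -> E x ->
    exists Q, tau' Q /\ Q x /\ forall y, Q y -> cl tau' E y.
Proof.
  intros HT Hs HT' Hd2 HTd2 Hc2 E x TE Ex.
  pose proof (tg_top _ _ HT) as Ht. pose proof (tg_top _ _ HT') as Ht'.
  pose (E' := fun w => E (gmul grp x w)).
  assert (TE' : tau E') by (apply tg_left; auto).
  assert (E'1 : E' (gmul grp (gone grp) (gone grp))) by (unfold E'; rewrite !gmul1r; auto).
  destruct (tg_mul grp tau E' _ _ HT TE' E'1) as [A [B [TA [TB [A1 [B1 HAB]]]]]].
  pose (V := fun v => A (ginv grp v) /\ B v).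
  assert (TV : tau V) by (apply open_inter; auto; apply tg_inv; auto).
  assert (V1 : V (gone grp)) by (split; [rewrite g_inv1|]; auto).
  assert (HV : forall a b, V a -> V b -> E (gmul grp x (gmul grp (ginv grp a) b))).
  { intros a b [Ha _] [_ Hb]. exact (HAB _ _ Ha Hb). }
  pose (S := fun n e => exists v, V v /\ e = gmul grp (s n) v).
  assert (Hcov : forall y, exists n, S n y).
  { intro y. destruct (Hs (fun w => V (gmul grp (ginv grp w) y))) as [n Hn].
    - apply (tg_inv grp tau (fun w => V (gmul grp w y))); auto. apply tg_right; auto.
    - exists y. rewrite gmulVl; auto.
    - exists n, (gmul grp (ginv grp (s n)) y). split; auto. rewrite g_VK; auto. }
  assert (Hex : exists n Q q, tau' Q /\ Q q /\ forall y, Q y -> cl tau' (S n) y).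
  { apply NNPP. intro Hno.
    pose (Gs := fun n y => exists N, tau' N /\ N y /\ forall e, N e -> ~ S n e).
    destruct (baire tau' d2 Gs (fun _ => True) Ht' Hd2 HTd2 Hc2) as [z [_ Hz]].
    - intro n. split.
      + apply open_local; auto. intros y [N [TN [Ny HN]]]. exists N. split; auto. split; auto.
        intros y' Ny'. exists N; auto.
      + intros Q TQ [q Qq]. apply NNPP. intro Hn. apply Hno. exists n, Q, q.
        split; auto. split; auto. intros y Qy. apply NNPP. intro Hc.
        apply Hn. exists y. split; auto. apply not_cl; auto.
    - apply open_full; auto.
    - exists x; auto.
    - destruct (Hcov z) as [n Sz]. destruct (Hz n) as [N [_ [Nz HN]]]. exact (HN z Nz Sz). }
  destruct Hex as [n [Q [q [TQ [Qq HQ]]]]].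
  exists (fun w => Q (gmul grp q (gmul grp (ginv grp x) w))). split; [|split].
  - apply (tg_left grp tau' (fun w => Q (gmul grp q w))); auto. apply tg_left; auto.
  - simpl. rewrite gmulVl, gmul1r; auto.
  - intros w Qw N TN Nw. set (t := gmul grp (ginv grp x) w) in *.
    pose (N1 := fun c => N (gmul grp x c)).
    assert (TN1 : tau' N1) by (apply tg_left; auto).
    assert (N1t : N1 (gmul grp (ginv grp q) (gmul grp q t))).
    { unfold N1. rewrite g_KV. unfold t. rewrite g_VK; auto. }
    destruct (tg_mul grp tau' N1 _ _ HT' TN1 N1t) as [A' [B' [TA' [TB' [A'q [B'q HA'B']]]]]].
    destruct (HQ q Qq (fun a => A' (ginv grp a))) as [e1 [Ae1 [v1 [Vv1 ->]]]].
    { apply tg_inv; auto. }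
    { exact A'q. }
    destruct (HQ _ Qw B' TB' B'q) as [e2 [Be2 [v2 [Vv2 ->]]]].
    pose proof (HA'B' _ _ Ae1 Be2) as H. unfold N1 in H.
    rewrite g_invM, <- gmulA, g_KV in H.
    exists (gmul grp x (gmul grp (ginv grp v1) v2)). split; auto.
Qed.


Lemma inv_pos n : 0 < / (INR n + 1).
Proof. apply Rinv_0_lt_compat; pose proof (pos_INR n); lra. Qed.

Lemma inv_le n m : (n <= m)%nat -> / (INR m + 1) <= / (INR n + 1).
Proof.
  intro h. apply Rinv_le_contravar. pose proof (pos_INR n); lra.
  apply le_INR in h; lra.
Qed.

Lemma step2 {G} grp (tau tau' : set (set G)) d1 d2 (s : nat -> G) :
  is_topological_group grp tau ->
  (forall U, tau U -> (exists x, U x) -> exists n, U (s n)) ->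
  is_metric d1 -> (forall U, tau U <-> metric_open d1 U) ->
  (forall u, cauchy_seq d1 u -> exists x, converges_to d1 u x) ->
  is_topological_group grp tau' ->
  is_metric d2 -> (forall U, tau' U <-> metric_open d2 U) ->
  (forall u, cauchy_seq d2 u -> exists x, converges_to d2 u x) ->
  (forall V, tau' V -> tau V) ->
  forall V, tau V -> tau' V.
Proof.
  intros HT Hs Hd1 HTd1 Hc1 HT' Hd2 HTd2 Hc2 Hsub.
  pose proof (tg_top _ _ HT) as Ht. pose proof (tg_top _ _ HT') as Ht'.
  pose proof (lemmaL grp tau tau' d2 s HT Hs HT' Hd2 HTd2 Hc2) as HL.
  pose (rad := fun (c : nat * nat) => / (INR (snd c) + 1)).
  pose (D := fun (c : nat * nat) y => d1 (s (fst c)) y < rad c).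
  pose (child := fun (c c' : nat * nat) => (snd c < snd c')%nat /\
          d1 (s (fst c)) (s (fst c')) + rad c' < rad c).
  pose (Good := fun c z => (exists c', child c c' /\ exists Q, tau' Q /\ Q z /\
                               forall y, Q y -> cl tau' (D c') y) \/
                           (exists N, tau' N /\ N z /\ forall e, N e -> ~ D c e)).
  assert (TD : forall c, tau (D c)) by (intro c; apply HTd1, ball_open; auto).
  assert (Hcover : forall c y, D c y -> exists c', child c c' /\ D c' y).
  { intros [i j] y Hy. unfold D, rad in Hy; simpl in Hy.
    set (eta := / (INR j + 1) - d1 (s i) y).
    assert (Heta : 0 < eta) by (unfold eta; lra).
    destruct (small_inv (eta / 3)) as [N HN]; [lra|].
    pose (j' := (N + j + 1)%nat).
    assert (Hr' : / (INR j' + 1) < eta / 3) by (apply HN; unfold j'; lia).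
    destruct (Hs (fun w => d1 y w < / (INR j' + 1))) as [i' Hi'].
    { apply HTd1, ball_open; auto. }
    { exists y. rewrite metric_refl; auto. apply inv_pos. }
    exists (i', j'). unfold child, D, rad; simpl. split; [split|].
    - unfold j'; lia.
    - pose proof (metric_tri d1 (s i) y (s i') Hd1). unfold eta in *. lra.
    - rewrite metric_sym; auto. }
  assert (Gopen : forall c, tau' (Good c)).
  { intro c. apply open_local; auto. intros z [[c' [Hc' [Q [TQ [Qz HQ]]]]]|[N [TN [Nz HN]]]].
    - exists Q. split; auto. split; auto. intros y Qy. left. exists c'. split; auto. exists Q; auto.
    - exists N. split; auto. split; auto. intros y Ny. right. exists N; auto. }
  assert (Gdense : forall c, t_dense tau' (Good c)).
  { intros c Q TQ [q Qq].
    destruct (classic (exists y, Q y /\ exists N, tau' N /\ N y /\ forall e, N e -> ~ D c e))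
      as [[y [Qy H]]|Hno].
    - exists y. split; auto. right; auto.
    - assert (Hcl : cl tau' (D c) q).
      { apply NNPP. intro Hn. apply Hno. exists q. split; auto. apply not_cl; auto. }
      destruct (Hcl Q TQ Qq) as [e [Qe De]].
      destruct (Hcover c e De) as [c' [Hc' De']].
      destruct (HL (D c') e (TD c') De') as [Q' [TQ' [Q'e HQ']]].
      exists e. split; [exact Qe|]. left. exists c'. split; [exact Hc'|]. exists Q'. split; [exact TQ'|]. split; [exact Q'e|exact HQ']. }
  assert (Key : forall z c0, (forall c, Good c z) -> cl tau' (D c0) z -> D c0 z).
  { intros z c0 Hz Hcl0.
    assert (st : forall c, exists c', cl tau' (D c) z -> child c c' /\ cl tau' (D c') z).
    { intro c. destruct (classic (cl tau' (D c) z)) as [h|h]; [|exists c; intro; contradiction].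
      destruct (Hz c) as [[c' [Hc' [Q [TQ [Qz HQ]]]]]|[N [TN [Nz HN]]]].
      - exists c'. intros _. split; auto.
      - exfalso. destruct (h N TN Nz) as [e [Ne De]]. exact (HN e Ne De). }
    pose (f := fun c => proj1_sig (constructive_indefinite_description _ (st c))).
    assert (Hf : forall c, cl tau' (D c) z -> child c (f c) /\ cl tau' (D (f c)) z).
    { intro c. exact (proj2_sig (constructive_indefinite_description _ (st c))). }
    clearbody f.
    pose (cs := fix cs n := match n with O => c0 | S n => f (cs n) end).
    assert (Hcs : forall n, cl tau' (D (cs n)) z /\ (n <= snd (cs n))%nat).
    { induction n as [|n IH]; simpl. split; auto; lia.
      destruct IH as [IH1 IH2]. destruct (Hf _ IH1) as [[h1 _] h2]. split; [auto|]. simpl in h1 |- *. lia. }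
    destruct (nested_balls d1 (fun n => s (fst (cs n))) (fun n => rad (cs n)) Hd1 Hc1)
      as [x Hx].
    - intro n; apply inv_pos.
    - intros e He. destruct (small_inv e He) as [N HN]. exists N. intros n Hn.
      eapply Rle_lt_trans; [apply inv_le, (proj2 (Hcs n))|]. apply HN; auto.
    - intros n w Hw. simpl in Hw |- *.
      destruct (Hf _ (proj1 (Hcs n))) as [[_ h] _].
      pose proof (metric_tri d1 (s (fst (cs n))) (s (fst (f (cs n)))) w Hd1). lra.
    - assert (zx : z = x).
      { apply (metric_eq d2); auto. apply Rle_antisym; [|apply metric_pos; auto].
        apply le_eps. intros del Hdel. rewrite Rplus_0_l.
        assert (TB : tau (fun y => d2 x y < del / 2)).
        { apply Hsub, HTd2, ball_open; auto. }
        apply HTd1 in TB. destruct (TB x) as [rho [Hrho Hin]].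
        { rewrite metric_refl; auto; lra. }
        destruct (small_inv (rho / 2)) as [N HN]; [lra|].
        destruct (proj1 (Hcs N) (fun y => d2 z y < del / 2)) as [e [He1 He2]].
        { apply HTd2, ball_open; auto. }
        { rewrite metric_refl; auto; lra. }
        pose proof (Hx N) as HxN. simpl in HxN.
        assert (rad (cs N) < rho / 2).
        { eapply Rle_lt_trans; [apply inv_le, (proj2 (Hcs N))|]. apply HN; auto. }
        unfold D in He2.
        pose proof (metric_tri d1 x (s (fst (cs N))) e Hd1) as T1.
        rewrite (metric_sym d1 x (s (fst (cs N)))) in T1 by auto.
        unfold rad in *. assert (T2 : d2 x e < del / 2) by (apply Hin; lra).
        pose proof (metric_tri d2 z e x Hd2) as T3. rewrite (metric_sym d2 e x) in T3 by auto. lra. }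
      subst z. specialize (Hx O). exact Hx. }
  intros V TV. apply open_local; auto. intros x Vx.
  pose (V1 := fun w => V (gmul grp x w)).
  assert (TV1 : tau V1) by (apply tg_left; auto).
  assert (V11 : V1 (gmul grp (gone grp) (gone grp))) by (unfold V1; rewrite !gmul1r; auto).
  destruct (tg_mul grp tau V1 _ _ HT TV1 V11) as [A [B [TA [TB [A1 [B1 HAB]]]]]].
  pose (W := fun v => A v /\ B (ginv grp v)).
  assert (TW : tau W) by (apply open_inter; auto; apply tg_inv; auto).
  assert (W1 : W (gone grp)) by (split; [|rewrite g_inv1]; auto).
  apply HTd1 in TW. destruct (TW _ W1) as [rho [Hrho HW]].
  destruct (small_inv (rho / 2)) as [N HN]; [lra|].
  destruct (Hs (fun w => d1 (gone grp) w < / (INR N + 1))) as [i Hi].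
  { apply HTd1, ball_open; auto. }
  { exists (gone grp). rewrite metric_refl; auto. apply inv_pos. }
  pose (c0 := (i, N)).
  assert (HDW : forall y, D c0 y -> W y).
  { intros y Hy. apply HW. unfold D, rad, c0 in Hy; simpl in Hy.
    pose proof (metric_tri d1 (gone grp) (s i) y Hd1). pose proof (HN N (le_n N)). lra. }
  assert (D01 : D c0 (gone grp)).
  { unfold D, rad, c0; simpl. rewrite metric_sym; auto. }
  destruct (HL (D c0) (gone grp) (TD c0) D01) as [Q0 [TQ0 [Q01 HQ0]]].
  assert (Hmain : forall y, Q0 y -> V1 y).
  { intros y Qy.
    pose (Gs := fun n w => Good (of_nat n) w /\ Good (of_nat n) (gmul grp (ginv grp y) w)).
    destruct (baire tau' d2 Gs (fun w => Q0 w /\ Q0 (gmul grp (ginv grp y) w)) Ht' Hd2 HTd2 Hc2)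
      as [w [[Qw Qw'] Hw]].
    - intro n. split.
      + apply open_inter; auto. apply tg_left; auto.
      + intros P TP [p Pp].
        destruct (Gdense (of_nat n) P TP (ex_intro _ p Pp)) as [w1 [Pw1 Gw1]].
        set (P' := fun w => P w /\ Good (of_nat n) w).
        assert (TP' : tau' P') by (apply open_inter; auto).
        destruct (Gdense (of_nat n) (fun u => P' (gmul grp y u))) as [u [Pu Gu]].
        { apply tg_left; auto. }
        { exists (gmul grp (ginv grp y) w1). rewrite g_VK. split; auto. }
        exists (gmul grp y u). destruct Pu. split; auto. split; auto. rewrite g_KV; auto.
    - apply open_inter; auto. apply tg_left; auto.
    - exists y. split; auto. rewrite gmulVl; auto.
    - assert (Hall : forall c z, (forall n, Good (of_nat n) z) -> Good c z).
      { intros c z H. rewrite <- (cancel_of_to c). apply H. }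
      assert (Dw : D c0 w).
      { apply Key; [intro c; apply Hall; intro n; apply (Hw n)|]. apply HQ0; auto. }
      assert (Dw' : D c0 (gmul grp (ginv grp y) w)).
      { apply Key; [intro c; apply Hall; intro n; apply (Hw n)|]. apply HQ0; auto. }
      apply HDW in Dw, Dw'.
      pose proof (HAB _ _ (proj1 Dw) (proj2 Dw')) as H.
      rewrite g_invM, g_invK, g_VK in H. exact H. }
  exists (fun w => Q0 (gmul grp (ginv grp x) w)). split; [|split].
  - apply tg_left; auto.
  - rewrite gmulVl; auto.
  - intros w Qw. apply Hmain in Qw. unfold V1 in Qw. rewrite g_VK in Qw. exact Qw.
Qed.


Theorem corollary4p4 (G : Type) (grp : GroupStr G) (tau : set (set G))
    (d : G -> G -> R) :
  is_topometric_group grp tau d -> polish tau -> steinhaus grp tau d ->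
  forall tau' : set (set G),
    is_topometric_group grp tau' d -> polish tau' ->
    forall U : set G, tau U <-> tau' U.
Proof.
  intros Htm [Ht [[s Hs] [d1 [Hd1 [HTd1 Hc1]]]]] Hst tau' Htm'
         [Ht' [Hsep' [d2 [Hd2 [HTd2 Hc2]]]]] U.
  pose proof Htm' as [HT' [_ [_ [Href' _]]]].
  pose proof Htm as [HT _].
  assert (Hsub : forall V, tau' V -> tau V).
  { apply (step1 grp tau d tau'); auto. }
  split; [|apply Hsub].
  apply (step2 grp tau tau' d1 d2 s); auto.
Qed.
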